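(* (Generalised Haldane relations.) Suppose the dynamic deficiency of the network is $0$, i.e. $\ker M=\ker\mathcal{L}(G)$. Let $G_1$ be a terminal strongly connected component of $G$, whose complexes (after reordering) are $C_1,\dots,C_k$, and let $\rho\in\ker\mathcal{L}(G)$ be a nonzero vector vanishing at all complexes outside $G_1$ (such a vector exists, is unique up to scaling, and has all entries $\rho_1,\dots,\rho_k$ nonzero). Then for every steady state $x$ and every $2\le i\le k$, \[x^{C_i}=\frac{\rho_i}{\rho_1}\,x^{C_1},\] these $k-1$ relations are type 1 complex-linear invariants on $C_1,\dots,C_k$, and they form a basis of $I_k$ (so $\dim I_k=k-1$).
   Context: Setup: species $S_1,\dots,S_n$, concentrations $x$, complexes $C_1,\dots,C_m\in\mathbb{Z}_{\ge0}^n$, reaction graph $G$ on complexes with positive edge labels $\kappa_{ij}$. Laplacian $\mathcal{L}(G)$: $\mathcal{L}(G)_{ji}=\kappa_{ij}$ for edges $C_i\to C_j$, other off-diagonal entries $0$, $\mathcal{L}(G)_{ii}=-\sum_j\kappa_{ij}$. $Y$ is the $n\times m$ matrix with columns $C_i$; $x^C=\prod_jx_j^{C(S_j)}$, $\Psi(x)=(x^{C_1},\dots,x^{C_m})^\top$; dynamics $dx/dt=Y\mathcal{L}(G)\Psi(x)$; $M=Y\mathcal{L}(G)$; steady state means $M\Psi(x)=0$. A strongly connected component (SCC) of $G$ is a maximal subgraph in which any two nodes are joined by directed paths in both directions; it is terminal if no edge leaves it. The dynamic deficiency is $\delta_D=\dim\ker M-\dim\ker\mathcal{L}(G)$. A type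 1 complex-linear invariant on $C_1,\dots,C_k$ is a polynomial $a_1x^{C_1}+\dots+a_kx^{C_k}$ with $(a_1,\dots,a_k,0,\dots,0)$ in the row span of $M$; $I_k$ is the space of these. *)

(* Defs.v *)
From HB Require Import structures.
From mathcomp Require Import all_boot all_order all_algebra.
Set Implicit Arguments. Unset Strict Implicit. Unset Printing Implicit Defensive.
Import Order.TTheory GRing.Theory Num.Theory.
Local Open Scope ring_scope.

(* Reaction network data:
   - n species, m complexes; complex i is the vector C i : 'I_n -> nat.
   - kappa : 'M_m, kappa i j = label of edge C_i -> C_j (0 = no edge);
     diagonal entries are ignored (no self-loops). *)

Definition edge (R : numDomainType) (m : nat) (kappa : 'M[R]_m) : rel 'I_m :=
  fun i j => (i != j) && (0 < kappa i j).

Definition laplacian (R : ringType) (m : nat) (kappa : 'M[R]_m) : 'M[R]_m :=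
  \matrix_(j, i) (if j == i then - \sum_(l | l != i) kappa i l else kappa i j).

Definition Ymx (R : ringType) (n m : nat) (C : 'I_m -> 'I_n -> nat) : 'M[R]_(n, m) :=
  \matrix_(s, i) (C i s)%:R.

Definition Mmx (R : ringType) (n m : nat) (C : 'I_m -> 'I_n -> nat)
  (kappa : 'M[R]_m) : 'M[R]_(n, m) := Ymx R C *m laplacian kappa.

Definition monomial (R : ringType) (n : nat) (x : 'I_n -> R) (c : 'I_n -> nat) : R :=
  \prod_(s < n) x s ^+ c s.

Definition Psi (R : ringType) (n m : nat) (C : 'I_m -> 'I_n -> nat)
  (x : 'I_n -> R) : 'cV[R]_m := \col_i monomial x (C i).

Definition steady_state (R : ringType) (n m : nat) (C : 'I_m -> 'I_n -> nat)
  (kappa : 'M[R]_m) (x : 'I_n -> R) : Prop :=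
  Mmx C kappa *m Psi C x = 0.

(* Dimension of the (column) kernel {v | A v = 0} of A : 'M_(p, q);
   kermx A^T is the row space {u | u A^T = 0}. *)
Definition dim_ker (F : fieldType) (p q : nat) (A : 'M[F]_(p, q)) : nat :=
  \rank (kermx A^T).

Definition dynamic_deficiency (F : fieldType) (n m : nat)
  (C : 'I_m -> 'I_n -> nat) (kappa : 'M[F]_m) : int :=
  (dim_ker (Mmx C kappa))%:Z - (dim_ker (laplacian kappa))%:Z.

Definition is_scc (R : numDomainType) (m : nat) (kappa : 'M[R]_m) (S : {set 'I_m}) : Prop :=
  [/\ S != set0,
      (forall i j, i \in S -> j \in S -> connect (edge kappa) i j) &
      (forall i j, i \in S -> connect (edge kappa) i j ->
                   connect (edge kappa) j i -> j \in S)].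

Definition terminal_scc (R : numDomainType) (m : nat) (kappa : 'M[R]_m) (S : {set 'I_m}) : Prop :=
  is_scc kappa S /\ (forall i j, i \in S -> edge kappa i j -> j \in S).

Definition supported_kernel_vector (R : ringType) (m : nat) (kappa : 'M[R]_m)
  (S : {set 'I_m}) (rho : 'cV[R]_m) : Prop :=
  [/\ rho != 0, laplacian kappa *m rho = 0 & (forall i, i \notin S -> rho i 0 = 0)].

(* Type 1 complex-linear invariant on the complexes in S, identified with its
   coefficient (row) vector a : 'rV_m: a vanishes outside S and lies in the
   row span of M. *)
Definition type1_invariant (F : fieldType) (n m : nat) (C : 'I_m -> 'I_n -> nat)
  (kappa : 'M[F]_m) (S : {set 'I_m}) (a : 'rV[F]_m) : Prop :=
  (forall i, i \notin S -> a 0 i = 0) /\ (a <= Mmx C kappa)%MS.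

(* Coefficient vector of the polynomial x^{C_i} - (rho_i/rho_{c1}) x^{C_{c1}}. *)
Definition haldane_vec (F : fieldType) (m : nat) (rho : 'cV[F]_m) (c1 i : 'I_m) : 'rV[F]_m :=
  \row_j ((j == i)%:R - (j == c1)%:R * (rho i 0 / rho c1 0)).

(* Main.v *)
Require Import Defs.
From HB Require Import structures.
From mathcomp Require Import all_boot all_order all_algebra ring.
Import Order.TTheory GRing.Theory Num.Theory.
Local Open Scope ring_scope.
Set Implicit Arguments. Unset Strict Implicit.

Lemma rowspace_orth (F : fieldType) p q (M : 'M[F]_(p, q)) (h : 'rV[F]_q) :
  (forall v : 'cV[F]_q, M *m v = 0 -> h *m v = 0) -> (h <= M)%MS.
Proof.
move=> hv.
set K := kermx M^T.
have hKM : K *m M^T = 0 by exact: mulmx_ker.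
have h1 : (h <= kermx K^T)%MS.
  apply/sub_kermxP; apply/matrixP => i r; rewrite (ord1 i) !mxE.
  have e : M *m (row r K)^T = 0.
    by apply: trmx_inj; rewrite trmx_mul trmxK -row_mul hKM row0 !trmx0.
  move: (hv _ e) => /matrixP /(_ 0 0); rewrite !mxE => H.
  by rewrite -[RHS]H; apply: eq_bigr => j _; rewrite !mxE.
have h2 : (M <= kermx K^T)%MS.
  apply/sub_kermxP; by rewrite -[M]trmxK -trmx_mul hKM trmx0.
have hr : (\rank (kermx K^T) <= \rank M)%N.
  rewrite mxrank_ker mxrank_tr /K mxrank_ker mxrank_tr.
  rewrite subKn //; exact: rank_leq_col.
have := mxrank_leqif_sup h2 => /leqifP.
case: ifP => [Hs _ | _ hlt]; first exact: submx_trans h1 Hs.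
by move: (leq_trans hlt hr); rewrite ltnn.
Qed.
Lemma lap_colsum (R : ringType) m (kappa : 'M[R]_m) i :
  \sum_j laplacian kappa j i = 0.
Proof.
rewrite (bigD1 i) //= mxE eqxx.
rewrite (eq_bigr (fun j => kappa i j)); first by rewrite addNr.
by move=> j hj; rewrite mxE (negbTE hj).
Qed.

Lemma lap_row (R : ringType) m (kappa : 'M[R]_m) (v : 'cV[R]_m) j :
  (laplacian kappa *m v) j 0 =
  \sum_(i | i != j) kappa i j * v i 0 - (\sum_(l | l != j) kappa j l) * v j 0.
Proof.
rewrite mxE (bigD1 j) //= mxE eqxx addrC mulNr; congr (_ + _).
by apply: eq_bigr => i hi; rewrite mxE eq_sym (negbTE hi).
Qed.
Lemma def_ker (F : fieldType) n m (C : 'I_m -> 'I_n -> nat) (kappa : 'M[F]_m) :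
  dynamic_deficiency C kappa = 0 ->
  forall v : 'cV[F]_m, Mmx C kappa *m v = 0 -> laplacian kappa *m v = 0.
Proof.
rewrite /dynamic_deficiency /dim_ker => /eqP; rewrite subr_eq0 => /eqP [] hr v hv.
set L := laplacian kappa; set M := Mmx C kappa.
have s1 : (kermx L^T <= kermx M^T)%MS.
  apply/sub_kermxP; rewrite /M /Mmx trmx_mul mulmxA mulmx_ker mul0mx //.
have := mxrank_leqif_sup s1 => /leqifP.
case: ifP => [Hs _ | _]; last by rewrite hr ltnn.
have : (v^T <= kermx L^T)%MS.
  apply: submx_trans Hs; apply/sub_kermxP; by rewrite -trmx_mul hv trmx0.
move/sub_kermxP; rewrite -trmx_mul => /(congr1 trmx); rewrite trmxK trmx0 //.
Qed.

Lemma abs_ker (R : realFieldType) m (kappa : 'M[R]_m)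
  (hk : forall i j, 0 <= kappa i j) (v : 'cV[R]_m) :
  laplacian kappa *m v = 0 ->
  laplacian kappa *m (\col_i `|v i 0|) = 0.
Proof.
move=> hv; set w := \col_i `|v i 0|.
have ge j : 0 <= (laplacian kappa *m w) j 0.
  rewrite lap_row; set d := \sum_(l | l != j) kappa j l.
  have hd : 0 <= d by apply: sumr_ge0 => l _.
  have : (laplacian kappa *m v) j 0 = 0 by rewrite hv mxE.
  rewrite lap_row => /eqP; rewrite subr_eq0 => /eqP E.
  rewrite subr_ge0 mxE.
  have <- : `|d * v j 0| = d * `|v j 0| by rewrite normrM ger0_norm.
  rewrite -E; apply: le_trans (ler_norm_sum _ _ _) _.
  by apply: ler_sum => i _; rewrite normrM ger0_norm // mxE.
have sum0 : \sum_j (laplacian kappa *m w) j 0 = 0.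
  under eq_bigr do rewrite mxE.
  rewrite exchange_big /=; apply: big1 => i _.
  by rewrite -mulr_suml lap_colsum mul0r.
apply/matrixP => j k; rewrite (ord1 k) [RHS]mxE.
by apply: (psumr_eq0P (P := predT) (F := fun i => (laplacian kappa *m w) i 0)) => // i _; exact: ge.
Qed.

Lemma back_edge (R : realFieldType) m (kappa : 'M[R]_m)
  (hk : forall i j, 0 <= kappa i j) (v : 'cV[R]_m) :
  laplacian kappa *m v = 0 -> forall i j, edge kappa i j -> v j 0 = 0 -> v i 0 = 0.
Proof.
move=> hv i j /andP [hij hpos] hj.
have := abs_ker hk hv => /matrixP /(_ j 0); rewrite lap_row mxE hj normr0 mulr0 subr0.
rewrite [RHS]mxE => H.
have nn : forall i0, i0 != j -> 0 <= kappa i0 j * (\col_i0 `|v i0 0|) i0 0.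
  by move=> i0 _; rewrite mxE mulr_ge0.
have := psumr_eq0P nn H hij; rewrite mxE => /eqP.
by rewrite mulf_eq0 normr_eq0 (gt_eqF hpos) /= => /eqP.
Qed.

Lemma back_connect (R : realFieldType) m (kappa : 'M[R]_m)
  (hk : forall i j, 0 <= kappa i j) (v : 'cV[R]_m) :
  laplacian kappa *m v = 0 -> forall i j, connect (edge kappa) i j -> v j 0 = 0 -> v i 0 = 0.
Proof.
move=> hv i j /connectP [p hp ->] {j}.
elim: p i hp => [|y p IH] i //= /andP [hiy hp] hl.
apply: (back_edge hk hv hiy); exact: IH.
Qed.

Lemma sum_delta (R : ringType) m (A : {set 'I_m}) (f : 'I_m -> R) k :
  \sum_(i in A) f i * (k == i)%:R = (k \in A)%:R * f k.
Proof.
rewrite big_mkcond (bigD1 k) //= eqxx mulr1 big1 ?addr0.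
  by case: (k \in A); rewrite ?mul1r ?mul0r.
by move=> j hj; rewrite eq_sym (negbTE hj) mulr0; case: ifP.
Qed.

Lemma sum_delta1 (R : ringType) m (f : 'I_m -> R) k :
  \sum_j (j == k)%:R * f j = f k.
Proof.
rewrite (bigD1 k) //= eqxx mul1r big1 ?addr0 //.
by move=> j /negbTE ->; rewrite mul0r.
Qed.

Unset Implicit Arguments.

Theorem mainTheorem3 (R : realFieldType) (n m : nat)
  (C : 'I_m -> 'I_n -> nat) (kappa : 'M[R]_m)
  (hkappa : forall i j, 0 <= kappa i j)
  (hdef : dynamic_deficiency C kappa = 0)
  (S : {set 'I_m}) (hS : terminal_scc kappa S)
  (c1 : 'I_m) (hc1 : c1 \in S)
  (rho : 'cV[R]_m) (hrho : supported_kernel_vector kappa S rho) :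
  [/\ (forall i, i \in S -> rho i 0 != 0),
      (forall rho', supported_kernel_vector kappa S rho' ->
         exists c : R, rho' = c *: rho),
      (forall x : 'I_n -> R, steady_state C kappa x ->
         forall i, i \in S -> i != c1 ->
           monomial x (C i) = rho i 0 / rho c1 0 * monomial x (C c1)),
      (forall i, i \in S -> i != c1 -> type1_invariant C kappa S (haldane_vec rho c1 i)) &
      ((forall c : 'I_m -> R,
          \sum_(i in S :\ c1) c i *: haldane_vec rho c1 i = 0 ->
          forall i, i \in S :\ c1 -> c i = 0) /\
       (forall a : 'rV[R]_m, type1_invariant C kappa S a ->
          exists c : 'I_m -> R, a = \sum_(i in S :\ c1) c i *: haldane_vec rho c1 i))].
Proof.
case: hS => [[hne hconn hmax] hterm].
case: hrho => [rho_ne hLrho hsupp].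
have Lker := def_ker hdef.
have hA : forall i, i \in S -> rho i 0 != 0.
  move=> j hj; apply/negP => /eqP hz; move/negP: rho_ne; apply.
  apply/eqP/matrixP => i k; rewrite (ord1 k) mxE.
  case: (boolP (i \in S)) => hi; last exact: hsupp.
  exact: (back_connect hkappa hLrho (hconn i j hi hj) hz).
have hc1n := hA c1 hc1.
have hB : forall v : 'cV[R]_m, laplacian kappa *m v = 0 -> forall i, i \in S ->
    v i 0 = v c1 0 / rho c1 0 * rho i 0.
  move=> v hv i hi; set t := v c1 0 / rho c1 0.
  have hw : laplacian kappa *m (v - t *: rho) = 0.
    by rewrite mulmxBr -scalemxAr hLrho scaler0 hv subr0.
  have := back_connect hkappa hw (hconn i c1 hi hc1); rewrite !mxE => H.
  by apply/eqP; rewrite -subr_eq0; apply/eqP; apply: H; rewrite /t divfK // subrr.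
split.
- exact: hA.
- move=> rho' [_ hL' hs']; exists (rho' c1 0 / rho c1 0).
  apply/matrixP => i k; rewrite (ord1 k) mxE.
  case: (boolP (i \in S)) => hi; first exact: hB.
  by rewrite (hs' i hi) (hsupp i hi) mulr0.
- move=> x hx i hi hne1.
  have := hB _ (Lker _ hx) i hi; rewrite /Psi !mxE => ->; ring.
- move=> i hi hne1; split.
    move=> k hk; rewrite mxE.
    have hki : (k == i) = false by apply/negbTE; apply/eqP => e; rewrite e hi in hk.
    have hkc : (k == c1) = false by apply/negbTE; apply/eqP => e; rewrite e hc1 in hk.
    by rewrite hki hkc mul0r subr0.
  apply: rowspace_orth => v hv.
  have hv' := Lker _ hv.
  apply/matrixP => a b; rewrite (ord1 a) (ord1 b) !mxE.
  under eq_bigr do rewrite mxE mulrBl -mulrA.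
  rewrite sumrB !sum_delta1 (hB v hv' i hi).
  by rewrite mulrAC [rho i 0 / _ * _]mulrAC [v c1 0 * _]mulrC subrr.
split.
- move=> c hsum k hk.
  have := congr1 (fun A : 'rV[R]_m => A 0 k) hsum; rewrite /= summxE mxE.
  have hkc : (k == c1) = false by apply/negbTE; move: hk; rewrite in_setD1 => /andP [].
  under eq_bigr do rewrite !mxE hkc mul0r subr0.
  by rewrite sum_delta hk mul1r.
- move=> a [ha hM].
  exists (fun i => a 0 i).
  have orth : \sum_j a 0 j * rho j 0 = 0.
    case/submxP: hM => D hD.
    have : a *m rho = 0 by rewrite hD /Mmx !mulmxA -(mulmxA _ (laplacian kappa)) hLrho mulmx0.
    by move/matrixP/(_ 0 0); rewrite !mxE.
  apply/matrixP => z k; rewrite (ord1 z) summxE.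
  under eq_bigr do rewrite !mxE.
  case: (eqVneq k c1) => [-> | hkc].
  + under eq_bigr => i hi.
      have -> : (c1 == i) = false.
        by apply/negbTE; move: hi; rewrite in_setD1 eq_sym => /andP [].
      rewrite mul1r sub0r mulrN; over.
    rewrite sumrN.
    move: orth; rewrite (bigD1 c1) //=.
    have -> : \sum_(j | j != c1) a 0 j * rho j 0 =
              \sum_(j in S :\ c1) a 0 j * rho j 0.
      rewrite [LHS]big_mkcond [RHS]big_mkcond; apply: eq_bigr => j _.
      rewrite in_setD1; case: (j != c1) => //=.
      by case: (boolP (j \in S)) => // hj; rewrite ha // mul0r.
    move/eqP; rewrite addrC addr_eq0 => /eqP E.
    under eq_bigr do rewrite mulrA.
    by rewrite -mulr_suml E mulNr opprK mulfK.
  + under eq_bigr do rewrite mul0r subr0.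
    rewrite sum_delta in_setD1 hkc /=.
    case: (boolP (k \in S)) => hk; first by rewrite mul1r.
    by rewrite mul0r ha.
Qed.
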